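(* Let $p$ be a prime and $m\ge0$. For $d\ge0$ write $d=q^{(m)}_dp^m+r$ with $0\le r<p^m$. Let $x,y$ be the standard coordinates on $\mathbb{P}^1$ with $xy=1$, and put $\partial_x^{\langle d\rangle_{(m)}}=\frac{q^{(m)}_d!}{d!}\partial_x^d$ and $\partial_y^{\langle d\rangle_{(m)}}=\frac{q^{(m)}_d!}{d!}\partial_y^d$. Then for every $s\ge1$ $$\partial_y^{\langle s\rangle_{(m)}}=(-1)^s\sum_{t=1}^sa^{(m)}_{s,t}x^{s+t}\partial_x^{\langle t\rangle_{(m)}},\qquad a^{(m)}_{s,t}=\binom{s}{t}\frac{(s-1)!}{(t-1)!}\frac{q^{(m)}_s!}{s!}\Big(\frac{q^{(m)}_t!}{t!}\Big)^{-1}=\binom{s-1}{t-1}\frac{q^{(m)}_s!}{q^{(m)}_t!}.$$ These numbers are integers, and $a^{(m)}_{s,1}=q^{(m)}_s!$, $a^{(m)}_{s,s}=1$. *)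

(* Defs.v *)
From Stdlib Require Import Reals ZArith Znumtheory Arith.
From Coquelicot Require Import Coquelicot.
Open Scope R_scope.

Definition qm (p m d : nat) : nat := Nat.div d (Nat.pow p m).

(* the normalising factor q^{(m)}_d! / d!, so that
   partial^{<d>_(m)} = dpf p m d * partial^d *)
Definition dpf (p m d : nat) : R := INR (fact (qm p m d)) / INR (fact d).

Definition acoef (p m s t : nat) : R :=
  Binomial.C s t * (INR (fact (s - 1)) / INR (fact (t - 1)))
  * dpf p m s * / dpf p m t.

(* Main.v *)
Require Import Defs.
From Stdlib Require Import Reals ZArith Znumtheory Arith Lia Lra.
From Coquelicot Require Import Coquelicot.
Open Scope R_scope.

Fixpoint cL (n t : nat) : R :=
  match n with
  | O => match t with O => 1 | _ => 0 end
  | S n' => (INR n' + INR t) * cL n' t +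
            match t with O => 0 | S t' => cL n' t' end
  end.

Lemma cL_big n t : (n < t)%nat -> cL n t = 0.
Proof.
  revert t; induction n as [|n IH]; intros t H; simpl.
  - destruct t; [lia|reflexivity].
  - destruct t as [|t]; [lia|]. rewrite IH by lia. rewrite IH by lia. ring.
Qed.

Lemma cL_S0 n : cL (S n) 0 = 0.
Proof. induction n; simpl in *. ring. rewrite IHn; ring. Qed.

Definition Lah (n t : nat) : R :=
  Binomial.C n t * INR (fact (n-1)) / INR (fact (t-1)).

Lemma factS n : INR (fact (S n)) = INR (S n) * INR (fact n).
Proof. change (fact (S n)) with (S n * fact n)%nat. apply mult_INR. Qed.

Lemma fnz n : INR (fact n) <> 0.
Proof. apply INR_fact_neq_0. Qed.

Lemma Lah_expl a k : Lah (S a + k) (S a) =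
  INR (fact (S a + k)) * INR (fact (a + k)) /
  (INR (fact (S a)) * INR (fact k) * INR (fact a)).
Proof.
  unfold Lah, Binomial.C.
  replace (S a + k - S a)%nat with k by lia.
  replace (S a + k - 1)%nat with (a + k)%nat by lia.
  replace (S a - 1)%nat with a by lia.
  field. repeat split; apply fnz.
Qed.

Lemma Lah_diag a : Lah (S a) (S a) = 1.
Proof.
  pose proof (Lah_expl a 0) as E. replace (S a + 0)%nat with (S a) in E by lia.
  rewrite E. replace (a+0)%nat with a by lia. change (INR (fact 0)) with 1. field.
  split; apply fnz.
Qed.

Lemma Lah_rec n u : (1 <= u <= S n)%nat ->
  (INR n + INR u) * (if Nat.ltb n u then 0 else Lah n u)
  + (if Nat.eqb u 1 then (if Nat.eqb n 0 then 1 else 0) else Lah n (u - 1))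
  = Lah (S n) u.
Proof.
  intros H.
  destruct (Nat.eq_dec u (S n)) as [->|Hne].
  - rewrite (proj2 (Nat.ltb_lt n (S n))) by lia.
    destruct n as [|n].
    + simpl. unfold Lah, Binomial.C. simpl. field.
    + replace (S (S n) =? 1)%nat with false by reflexivity.
      replace (S (S n) - 1)%nat with (S n) by lia.
      rewrite !Lah_diag. ring.
  - rewrite (proj2 (Nat.ltb_ge n u)) by lia.
    destruct u as [|[|a]]; [lia| |].
    + simpl Nat.eqb. destruct n as [|n]; [lia|]. simpl Nat.eqb.
      pose proof (Lah_expl 0 n) as E1. pose proof (Lah_expl 0 (S n)) as E2.
      simpl (S 0 + n)%nat in E1. simpl (S 0 + S n)%nat in E2.
      rewrite E1, E2. rewrite !factS.
      replace (0 + S n)%nat with (S n) by lia. rewrite !factS.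
      simpl (0+n)%nat. rewrite !S_INR. simpl INR. field.
      repeat split; try apply fnz; try apply not_0_INR; try lia;
       pose proof (pos_INR n); lra.
    + replace (S (S a) =? 1)%nat with false by reflexivity.
      destruct (Nat.le_exists_sub (S (S a)) n ltac:(lia)) as [k [Hk _]].
      subst n. replace (S (S a) - 1)%nat with (S a) by lia.
      pose proof (Lah_expl (S a) k) as E1.
      pose proof (Lah_expl a (S k)) as E2.
      pose proof (Lah_expl (S a) (S k)) as E3.
      replace (S a + S k)%nat with (k + S (S a))%nat in E2 by lia.
      replace (S (S a) + k)%nat with (k + S (S a))%nat in E1 by lia.
      replace (S (S a) + S k)%nat with (S (k + S (S a)))%nat in E3 by lia.
      rewrite E1, E2, E3.
      replace (k + S (S a))%nat with (S (S (a + k))) by lia.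
      replace (S a + k)%nat with (S (a + k)) by lia.
      replace (a + S k)%nat with (S (a + k)) by lia.
      replace (S a + S k)%nat with (S (S (a + k))) by lia.
      rewrite !factS.
      rewrite ?S_INR, ?plus_INR, ?S_INR.
      field. repeat split; try apply fnz; pose proof (pos_INR a); pose proof (pos_INR k); lra.
Qed.

Lemma cL_Lah n t : (1 <= t <= n)%nat -> cL n t = Lah n t.
Proof.
  revert t; induction n as [|n IH]; intros t H; [lia|].
  rewrite <- Lah_rec by lia. simpl cL.
  f_equal.
  - f_equal. destruct (Nat.ltb_spec n t).
    + apply cL_big; lia.
    + apply IH; lia.
  - destruct t as [|t]; [lia|].
    destruct t as [|t].
    + simpl. destruct n; simpl. reflexivity. apply cL_S0.
    + replace (S (S t) =? 1)%nat with false by reflexivity.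
      replace (S (S t) - 1)%nat with (S t) by lia. apply IH; lia.
Qed.

Lemma is_derive_sum (F : nat -> R -> R) (F' : nat -> R) (y : R) (b : nat) :
  (forall k, (k <= b)%nat -> is_derive (F k) y (F' k)) ->
  is_derive (fun z => sum_n_m (fun k => F k z) 0 b) y (sum_n_m F' 0 b).
Proof.
  induction b as [|b IH]; intros H.
  - rewrite sum_n_n. apply (is_derive_ext (F 0%nat)).
    + intros z; now rewrite sum_n_n.
    + apply H; lia.
  - rewrite sum_n_Sm by lia.
    apply (is_derive_ext (fun z => plus (sum_n_m (fun k => F k z) 0 b) (F (S b) z))).
    + intros z; now rewrite sum_n_Sm by lia.
    + apply (@is_derive_plus R_AbsRing R_NormedModule). apply IH; intros; apply H; lia. apply H; lia.
Qed.

Lemma is_derive_invpow (K : nat) (y : R) : y <> 0 ->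
  is_derive (fun z => (/ z) ^ K) y (- INR K * (/ y) ^ (S K)).
Proof.
  intros Hy.
  evar (l : R).
  assert (H : is_derive (fun z => (/ z) ^ K) y l).
  { apply (is_derive_pow (fun z => / z)). apply is_derive_inv. apply is_derive_id. exact Hy. }
  eapply is_derive_ext; [intros; reflexivity|]. subst l.
  destruct K as [|K].
  - simpl in H |- *. replace (- 0 * (/ y * 1)) with (0 * (- one / y ^ 2) * 1). exact H.
    unfold one; simpl; field; auto.
  - replace (- INR (S K) * (/ y) ^ S (S K)) with (INR (S K) * (- one / (y^2)) * (/ y) ^ Init.Nat.pred (S K)).
    exact H. simpl Init.Nat.pred. unfold one; simpl. field. auto.
Qed.

Lemma term_deriv (c : R) (K : nat) (f : R -> R) (t : nat) (y : R) :
  y <> 0 -> ex_derive (Derive_n f t) (/ y) ->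
  is_derive (fun z => c * (/ z) ^ K * Derive_n f t (/ z)) y
    (- (c * INR K) * (/ y) ^ (S K) * Derive_n f t (/ y)
     - c * (/ y) ^ (S (S K)) * Derive_n f (S t) (/ y)).
Proof.
  intros Hy Hd.
  auto_derive.
  - repeat split; auto.
  - change (Derive (fun x : R => Derive_n f t x) (/ y)) with (Derive_n f (S t) (/ y)).
    destruct K as [|K]; simpl; field; auto.
Qed.

Ltac rR := match goal with |- ?x = ?y => change (@eq R x y) end.

Lemma plusR (a b : R) : plus a b = a + b. Proof. reflexivity. Qed.
Lemma zeroR : (zero : R) = 0. Proof. reflexivity. Qed.
Lemma multR (a b : R) : mult a b = a * b. Proof. reflexivity. Qed.

Lemma sum_step n (w : R) (H : nat -> R) :
  (-1) ^ n * sum_n_m (fun t => - (cL n t * INR (n + t)) * w ^ (S (n + t)) * H t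
                                - cL n t * w ^ (S (S (n + t))) * H (S t)) 0 n
  = (-1) ^ (S n) * sum_n_m (fun u => cL (S n) u * w ^ (S n + u) * H u) 0 (S n).
Proof.
  set (a := fun t => cL n t * INR (n + t) * w ^ (S (n + t)) * H t).
  set (b := fun t => cL n t * w ^ (S (S (n + t))) * H (S t)).
  assert (SA : sum_n_m (fun u => (INR n + INR u) * cL n u * w ^ (S n + u) * H u) 0 (S n)
               = sum_n_m a 0 n).
  { rewrite sum_n_Sm by lia. rewrite (cL_big n (S n)) by lia.
    rewrite plusR. rewrite Rmult_0_r, !Rmult_0_l, Rplus_0_r.
    apply sum_n_m_ext_loc. intros k _. unfold a. rewrite plus_INR. replace (S n + k)%nat with (S (n + k)) by lia. rR. ring. }
  assert (SB : sum_n_m (fun u => (match u with O => 0 | S u' => cL n u' end) * w ^ (S n + u) * H u) 0 (S n)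
               = sum_n_m b 0 n).
  { rewrite sum_Sn_m by lia. rewrite plusR, !Rmult_0_l, Rplus_0_l.
    rewrite <- sum_n_m_S. apply sum_n_m_ext_loc. intros k _. unfold b.
    replace (S n + S k)%nat with (S (S (n + k))) by lia. reflexivity. }
  assert (E1 : sum_n_m (fun u => cL (S n) u * w ^ (S n + u) * H u) 0 (S n)
    = plus (sum_n_m (fun u => (INR n + INR u) * cL n u * w ^ (S n + u) * H u) 0 (S n))
           (sum_n_m (fun u => (match u with O => 0 | S u' => cL n u' end) * w ^ (S n + u) * H u) 0 (S n))).
  { rewrite <- sum_n_m_plus. apply sum_n_m_ext_loc. intros k _. rewrite plusR. simpl cL. rR. ring. }
  assert (E2 : sum_n_m (fun t => - (cL n t * INR (n + t)) * w ^ (S (n + t)) * H t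
                                - cL n t * w ^ (S (S (n + t))) * H (S t)) 0 n
    = (-1) * (sum_n_m a 0 n + sum_n_m b 0 n)).
  { rewrite <- plusR, <- sum_n_m_plus.
    rewrite <- (sum_n_m_mult_l (K := R_Ring)). apply sum_n_m_ext_loc. intros k _.
    unfold a, b. unfold mult, plus; simpl. rR. ring. }
  rewrite E1, SA, SB, E2. unfold plus; simpl. rR. ring.
Qed.

Lemma loc_neq0 (a : R) : a <> 0 -> locally a (fun y => y <> 0).
Proof.
  intros Ha.
  assert (Hp : 0 < Rabs a) by (apply Rabs_pos_lt; exact Ha).
  exists (mkposreal _ Hp). intros y Hy ->.
  change (Rabs (0 - a) < Rabs a) in Hy.
  rewrite Rminus_0_l, Rabs_Ropp in Hy. lra.
Qed.

Lemma key (f : R -> R) (x : R) : x <> 0 ->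
  locally x (fun z => forall k : nat, ex_derive_n f k z) ->
  forall n, locally (/ x) (fun y => Derive_n (fun y => f (/ y)) n y =
      (-1) ^ n * sum_n_m (fun t => cL n t * (/ y) ^ (n + t) * Derive_n f t (/ y)) 0 n).
Proof.
  intros Hx U.
  assert (V : locally (/ x) (fun y => y <> 0 /\ forall k, ex_derive_n f k (/ y))).
  { apply filter_and. apply loc_neq0. apply Rinv_neq_0_compat; exact Hx.
    assert (Hc : @continuous R_UniformSpace R_UniformSpace (fun y => / y) (/ x)).
    { apply (ex_derive_continuous (K := R_AbsRing) (V := R_NormedModule)). auto_derive. apply Rinv_neq_0_compat; exact Hx. }
    unfold continuous in Hc. rewrite Rinv_inv in Hc. exact (Hc _ U). }
  induction n as [|n IH].
  - apply filter_forall. intros y. simpl. rewrite sum_n_n. simpl. ring.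
  - apply locally_locally in IH.
    generalize (filter_and _ _ IH V). apply filter_imp.
    intros y [Hl [Hy Hd]].
    change (Derive_n (fun y => f (/ y)) (S n) y) with (Derive (Derive_n (fun y => f (/ y)) n) y).
    rewrite (Derive_ext_loc _ _ _ Hl).
    apply is_derive_unique.
    rewrite <- sum_step.
    apply is_derive_scal.
    apply (is_derive_sum (fun t z => cL n t * (/ z) ^ (n + t) * Derive_n f t (/ z))).
    intros k _. apply term_deriv. exact Hy. exact (Hd (S k)).
Qed.

Lemma Cn0 n : Binomial.C n 0 = 1.
Proof. unfold Binomial.C. rewrite Nat.sub_0_r. change (INR (fact 0)) with 1. field. apply fnz. Qed.
Lemma Cnn n : Binomial.C n n = 1.
Proof. unfold Binomial.C. rewrite Nat.sub_diag. change (INR (fact 0)) with 1. field. apply fnz. Qed.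

Lemma C_nat n k : (k <= n)%nat -> exists z : nat, Binomial.C n k = INR z.
Proof.
  revert k; induction n as [|n IH]; intros k Hk.
  - replace k with 0%nat by lia. exists 1%nat. rewrite Cn0. reflexivity.
  - destruct k as [|k]. exists 1%nat. rewrite Cn0. reflexivity.
    destruct (Nat.eq_dec k n) as [->|Hne]. exists 1%nat. rewrite Cnn. reflexivity.
    rewrite <- pascal by lia.
    destruct (IH k ltac:(lia)) as [z1 E1]. destruct (IH (S k) ltac:(lia)) as [z2 E2].
    exists (z1 + z2)%nat. rewrite E1, E2, plus_INR. reflexivity.
Qed.

Lemma fact_dvd a b : (a <= b)%nat -> exists k, fact b = (fact a * k)%nat.
Proof.
  intros H. induction H as [|b H IH].
  - exists 1%nat. lia.
  - destruct IH as [k Hk]. exists (S b * k)%nat. change (fact (S b)) with (S b * fact b)%nat.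
    rewrite Hk. lia.
Qed.

Lemma dpf_nz p m t : dpf p m t <> 0.
Proof. unfold dpf. apply Rmult_integral_contrapositive_currified. apply fnz. apply Rinv_neq_0_compat, fnz. Qed.

Lemma acoef_Lah p m s t : acoef p m s t = Lah s t * dpf p m s / dpf p m t.
Proof. unfold acoef, Lah. pose proof (dpf_nz p m t). pose proof (fnz (t-1)). field. tauto. Qed.

Lemma acoef_alt p m s t : (1 <= t <= s)%nat ->
  acoef p m s t = Binomial.C (s - 1) (t - 1) * INR (fact (qm p m s)) / INR (fact (qm p m t)).
Proof.
  intros H. unfold acoef, dpf, Binomial.C.
  replace (s - 1 - (t - 1))%nat with (s - t)%nat by lia.
  destruct s as [|s]; [lia|]. destruct t as [|t]; [lia|].
  simpl (S s - 1)%nat. simpl (S t - 1)%nat.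
  rewrite !factS. field. repeat split; try apply fnz; apply not_0_INR; lia.
Qed.

Theorem mainTheorem11 (p m : nat) (hp : prime (Z.of_nat p)) (s : nat) (hs : (1 <= s)%nat) :
  (forall (f : R -> R) (x : R), x <> 0 ->
     locally x (fun z => forall k : nat, ex_derive_n f k z) ->
     dpf p m s * Derive_n (fun y => f (/ y)) s (/ x)
     = (-1) ^ s * sum_n_m (fun t => acoef p m s t * x ^ (s + t) * (dpf p m t * Derive_n f t x)) 1 s)
  /\ (forall t : nat, (1 <= t <= s)%nat ->
        acoef p m s t
        = Binomial.C (s - 1) (t - 1) * INR (fact (qm p m s)) / INR (fact (qm p m t))
        /\ exists z : Z, acoef p m s t = IZR z)
  /\ acoef p m s 1 = INR (fact (qm p m s))
  /\ acoef p m s s = 1.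
Proof.
  assert (Hp2 := prime_ge_2 _ hp).
  assert (Hpm : (p ^ m <> 0)%nat) by (apply Nat.pow_nonzero; lia).
  split; [|split; [|split]].
  - intros f x Hx U.
    pose proof (locally_singleton _ _ (key f x Hx U s)) as E. simpl in E.
    rewrite E, Rinv_inv.
    destruct s as [|s']; [lia|].
    rewrite sum_Sn_m by lia. rewrite cL_S0.
    rewrite plusR, !Rmult_0_l, Rplus_0_l.
    assert (Hs : sum_n_m (fun t => acoef p m (S s') t * x ^ (S s' + t) * (dpf p m t * Derive_n f t x)) 1 (S s')
      = dpf p m (S s') * sum_n_m (fun t => cL (S s') t * x ^ (S s' + t) * Derive_n f t x) 1 (S s')).
    { rewrite <- (sum_n_m_mult_l (K := R_Ring)). apply sum_n_m_ext_loc. intros k Hk.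
      rewrite cL_Lah by lia. rewrite acoef_Lah. unfold mult; simpl.
      pose proof (dpf_nz p m k). field. auto. }
    rewrite Hs. ring.
  - intros t Ht. split; [apply acoef_alt; exact Ht|].
    rewrite acoef_alt by exact Ht.
    assert (Hq : (qm p m t <= qm p m s)%nat).
    { unfold qm. apply Nat.Div0.div_le_mono. lia. }
    destruct (fact_dvd _ _ Hq) as [k Hk].
    destruct (C_nat (s - 1) (t - 1) ltac:(lia)) as [z Hz].
    exists (Z.of_nat (z * k)). rewrite <- INR_IZR_INZ, Hk, Hz, !mult_INR.
    field. apply fnz.
  - rewrite acoef_alt by lia. rewrite Cn0.
    assert (H1 : fact (qm p m 1) = 1%nat).
    { unfold qm. destruct (Nat.eq_dec (p ^ m) 1) as [->|Hne].
      - reflexivity.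
      - rewrite Nat.div_small by lia. reflexivity. }
    rewrite H1. simpl INR. field.
  - rewrite acoef_alt by lia. rewrite Cnn. field. apply fnz.
Qed.
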